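(* Let $(X,d)$ be a nonempty metric space, let $p:[0,1]\to X$ be a rectifiable path with range $Y=p([0,1])$, and let $F:X\rightarrow K(X)$ and $\beta\in[0,1]$ be such that $s_Y(F(x))<\beta$ for all $x\in Y$. Then $l(F\circ p)\le\beta\, l(p)<\infty$, where $l(F\circ p):=\sup_{\pi\in\Pi}\sum_{i=1}^n H(F(p(t_{i-1})),F(p(t_i)))$.
   Context: $\Pi$ is the set of finite partitions $0=t_0<\cdots<t_n=1$ of $[0,1]$; $l(p)=\sup_{\pi\in\Pi}\sum_i d(p(t_{i-1}),p(t_i))$, and $p$ is rectifiable if $p$ is continuous and $l(p)<\infty$. $K(X)$ is the set of nonempty compact subsets of $X$; $H$ is the Hausdorff distance. For $x\in Y$, $s_Y(F(x)):=\limsup_{y\to x,\ y\in Y\setminus\{x\}}\frac{H(F(x),F(y))}{d(x,y)}$ if $x$ is a limit point of $Y$, and $s_Y(F(x))=0$ otherwise. *)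

(* Defs.v *)
From Stdlib Require Import Reals List Classical ClassicalEpsilon.
From Coquelicot Require Import Coquelicot.
Open Scope R_scope.

Section MetricDefs.
Variable X : Type.
Variable d : X -> X -> R.

Record is_metric : Prop := {
  metric_sep : forall x y, d x y = 0 <-> x = y;
  metric_sym : forall x y, d x y = d y x;
  metric_tri : forall x y z, d x z <= d x y + d y z }.

Definition open_set (U : X -> Prop) : Prop :=
  forall x, U x -> exists e, 0 < e /\ forall y, d x y < e -> U y.

Definition compact_set (A : X -> Prop) : Prop :=
  forall (I : Type) (U : I -> X -> Prop),
    (forall i, open_set (U i)) -> (forall a, A a -> exists i, U i a) ->
    exists l : list I, forall a, A a -> exists i, In i l /\ U i a.

Definition in_KX (A : X -> Prop) : Prop := (exists a, A a) /\ compact_set A.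

Definition dist_pt_set (a : X) (B : X -> Prop) : R :=
  real (Glb_Rbar (fun r => exists b, B b /\ r = d a b)).

(* Hausdorff distance (finite on K(X)) *)
Definition hausdorff (A B : X -> Prop) : R :=
  Rmax (real (Lub_Rbar (fun r => exists a, A a /\ r = dist_pt_set a B)))
       (real (Lub_Rbar (fun r => exists b, B b /\ r = dist_pt_set b A))).

Definition is_limit_point (Y : X -> Prop) (x : X) : Prop :=
  forall delta, 0 < delta -> exists y, Y y /\ y <> x /\ d x y < delta.

(* limsup_{y -> x, y in Y \ {x}} H(F x, F y)/d(x,y)
   = inf_{delta>0} sup_{y in Y, y<>x, d(x,y)<delta} ..., computed in Rbar as the
   infimum of all reals s bounding some such sup from above. *)
Definition local_sup (F : X -> X -> Prop) (Y : X -> Prop) (x : X) (delta : R) : Rbar :=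
  Lub_Rbar (fun r => exists y, Y y /\ y <> x /\ d x y < delta /\
                               r = hausdorff (F x) (F y) / d x y).

Definition local_lip (F : X -> X -> Prop) (Y : X -> Prop) (x : X) : Rbar :=
  Glb_Rbar (fun s => exists delta, 0 < delta /\
                       Rbar_le (local_sup F Y x delta) (Finite s)).

Definition s_Y (F : X -> X -> Prop) (Y : X -> Prop) (x : X) : Rbar :=
  if excluded_middle_informative (is_limit_point Y x) then local_lip F Y x
  else Finite 0.

(* sum_{i=1}^n g(i-1) = sum_{i<n} g i *)
Fixpoint psum (g : nat -> R) (n : nat) : R :=
  match n with O => 0 | S k => psum g k + g k end.

Definition is_partition (n : nat) (t : nat -> R) : Prop :=
  t O = 0 /\ t n = 1 /\ forall i, (i < n)%nat -> t i < t (S i).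

Definition variation {Z : Type} (D : Z -> Z -> R) (q : R -> Z) : Rbar :=
  Lub_Rbar (fun s => exists (n : nat) (t : nat -> R), is_partition n t /\
                       s = psum (fun i => D (q (t i)) (q (t (S i)))) n).

Definition path_length (p : R -> X) : Rbar := variation d p.

Definition continuous_on01 (p : R -> X) : Prop :=
  forall t, 0 <= t <= 1 -> forall e, 0 < e -> exists delta, 0 < delta /\
    forall s, 0 <= s <= 1 -> Rabs (s - t) < delta -> d (p t) (p s) < e.

Definition rectifiable (p : R -> X) : Prop :=
  continuous_on01 p /\ Rbar_lt (path_length p) p_infty.

Definition set_path_length (F : X -> X -> Prop) (p : R -> X) : Rbar :=
  variation hausdorff (fun t => F (p t)).
End MetricDefs.

(* Main.v *)
Require Import Defs.
From Stdlib Require Import Reals Lra List Classical ClassicalEpsilon Lia.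
From Coquelicot Require Import Coquelicot.
Open Scope R_scope.

Lemma lub_real (E : R -> Prop) (e0 M : R) : E e0 -> (forall e, E e -> e <= M) ->
  (forall e, E e -> e <= real (Lub_Rbar E)) /\
  (forall m, (forall e, E e -> e <= m) -> real (Lub_Rbar E) <= m).
Proof.
  intros H0 HM.
  destruct (Lub_Rbar_correct E) as [Hub Hl].
  assert (A1: Rbar_le (Lub_Rbar E) M) by (apply Hl; intros e He; simpl; apply HM; auto).
  assert (A2: Rbar_le e0 (Lub_Rbar E)) by (apply Hub; auto).
  destruct (Lub_Rbar E) as [l| |]; simpl in *; try contradiction.
  split.
  - intros e He. exact (Hub e He).
  - intros m Hm. exact (Hl (Finite m) (fun e He => Hm e He)).
Qed.

Lemma glb_real (E : R -> Prop) (e0 M : R) : E e0 -> (forall e, E e -> M <= e) ->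
  (forall e, E e -> real (Glb_Rbar E) <= e) /\
  (forall m, (forall e, E e -> m <= e) -> m <= real (Glb_Rbar E)).
Proof.
  intros H0 HM.
  destruct (Glb_Rbar_correct E) as [Hub Hl].
  assert (A1: Rbar_le M (Glb_Rbar E)) by (apply Hl; intros e He; simpl; apply HM; auto).
  assert (A2: Rbar_le (Glb_Rbar E) e0) by (apply Hub; auto).
  destruct (Glb_Rbar E) as [l| |]; simpl in *; try contradiction.
  split.
  - intros e He. exact (Hub e He).
  - intros m Hm. exact (Hl (Finite m) (fun e He => Hm e He)).
Qed.

Lemma d_nonneg X d (Hd : is_metric X d) x y : 0 <= d x y.
Proof.
  destruct Hd as [S Sy T].
  pose proof (T x y x). rewrite (Sy y x) in H. assert (d x x = 0) by (apply S; auto). lra.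
Qed.

Lemma d_refl X d (Hd : is_metric X d) x : d x x = 0.
Proof. destruct Hd as [S _ _]. apply S; auto. Qed.

Lemma dist_props X d (Hd : is_metric X d) (B : X -> Prop) (b0 : X) (Hb0 : B b0) (a : X) :
  (forall b, B b -> dist_pt_set X d a B <= d a b) /\ 0 <= dist_pt_set X d a B /\
  (forall m, (forall b, B b -> m <= d a b) -> m <= dist_pt_set X d a B).
Proof.
  unfold dist_pt_set.
  destruct (glb_real (fun r => exists b, B b /\ r = d a b) (d a b0) 0) as [G1 G2].
  - exists b0; auto.
  - intros e [b [_ ->]]. apply d_nonneg; auto.
  - split; [|split].
    + intros b Hb. apply G1. exists b; auto.
    + apply G2. intros e [b [_ ->]]. apply d_nonneg; auto.
    + intros m Hm. apply G2. intros e [b [Hb ->]]. auto.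
Qed.

Definition bnd (X : Type) (d : X -> X -> R) (A : X -> Prop) := exists (x0 : X) M, forall a, A a -> d x0 a <= M.

Lemma sup_props X d (Hd : is_metric X d) (A B : X -> Prop) a0 b0 :
  A a0 -> B b0 -> bnd X d A ->
  let h := real (Lub_Rbar (fun r => exists a, A a /\ r = dist_pt_set X d a B)) in
  (forall a, A a -> dist_pt_set X d a B <= h) /\
  (forall m, (forall a, A a -> dist_pt_set X d a B <= m) -> h <= m).
Proof.
  intros Ha0 Hb0 [x0 [M HM]] h.
  destruct (lub_real (fun r => exists a, A a /\ r = dist_pt_set X d a B)
     (dist_pt_set X d a0 B) (M + d x0 b0)) as [L1 L2].
  - exists a0; auto.
  - intros e [a [Ha ->]].
    destruct (dist_props X d Hd B b0 Hb0 a) as [D1 _].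
    pose proof (D1 b0 Hb0). pose proof (HM a Ha).
    destruct Hd as [_ Sy T]. pose proof (T a x0 b0). rewrite (Sy a x0) in H1. lra.
  - split.
    + intros a Ha. apply L1. exists a; auto.
    + intros m Hm. apply L2. intros e [a [Ha ->]]. auto.
Qed.

Lemma haus_props X d (Hd : is_metric X d) (A B : X -> Prop) a0 b0 :
  A a0 -> B b0 -> bnd X d A -> bnd X d B ->
  (forall a, A a -> dist_pt_set X d a B <= hausdorff X d A B) /\
  (forall b, B b -> dist_pt_set X d b A <= hausdorff X d A B) /\
  (forall m, (forall a, A a -> dist_pt_set X d a B <= m) ->
             (forall b, B b -> dist_pt_set X d b A <= m) -> hausdorff X d A B <= m).
Proof.
  intros Ha Hb BA BB.
  destruct (sup_props X d Hd A B a0 b0 Ha Hb BA) as [S1 S2].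
  destruct (sup_props X d Hd B A b0 a0 Hb Ha BB) as [T1 T2].
  unfold hausdorff. split; [|split].
  - intros a H. eapply Rle_trans; [apply S1; auto| apply Rmax_l].
  - intros b H. eapply Rle_trans; [apply T1; auto| apply Rmax_r].
  - intros m H1 H2. apply Rmax_lub; auto.
Qed.

Lemma haus_sym X d A B : hausdorff X d A B = hausdorff X d B A.
Proof. unfold hausdorff. apply Rmax_comm. Qed.

Lemma haus_self X d (Hd : is_metric X d) A a0 : A a0 -> bnd X d A -> hausdorff X d A A <= 0.
Proof.
  intros Ha BA. destruct (haus_props X d Hd A A a0 a0 Ha Ha BA BA) as [_ [_ H3]].
  assert (forall a, A a -> dist_pt_set X d a A <= 0).
  { intros a H. destruct (dist_props X d Hd A a0 Ha a) as [D1 _].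
    pose proof (D1 a H). rewrite d_refl in H0; auto. }
  apply H3; auto.
Qed.

Lemma dist_lip X d (Hd : is_metric X d) (C : X -> Prop) c0 x b : C c0 ->
  dist_pt_set X d x C <= d x b + dist_pt_set X d b C.
Proof.
  intros Hc.
  destruct (dist_props X d Hd C c0 Hc x) as [D1 _].
  destruct (dist_props X d Hd C c0 Hc b) as [_ [_ E3]].
  assert (dist_pt_set X d x C - d x b <= dist_pt_set X d b C).
  { apply E3. intros c H. pose proof (D1 c H). destruct Hd as [_ _ T].
    pose proof (T x b c). lra. }
  lra.
Qed.

Lemma dist_via X d (Hd : is_metric X d) (B C : X -> Prop) b0 c0 x K : B b0 -> C c0 ->
  (forall b, B b -> dist_pt_set X d b C <= K) ->
  dist_pt_set X d x C <= dist_pt_set X d x B + K.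
Proof.
  intros Hb Hc HK.
  destruct (dist_props X d Hd B b0 Hb x) as [_ [_ E3]].
  assert (dist_pt_set X d x C - K <= dist_pt_set X d x B).
  { apply E3. intros b H. pose proof (HK b H). pose proof (dist_lip X d Hd C c0 x b Hc). lra. }
  lra.
Qed.

Lemma haus_tri X d (Hd : is_metric X d) A B C a0 b0 c0 :
  A a0 -> B b0 -> C c0 -> bnd X d A -> bnd X d B -> bnd X d C ->
  hausdorff X d A C <= hausdorff X d A B + hausdorff X d B C.
Proof.
  intros Ha Hb Hc BA BB BC.
  destruct (haus_props X d Hd A B a0 b0 Ha Hb BA BB) as [P1 [P2 _]].
  destruct (haus_props X d Hd B C b0 c0 Hb Hc BB BC) as [Q1 [Q2 _]].
  destruct (haus_props X d Hd A C a0 c0 Ha Hc BA BC) as [_ [_ R3]].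
  apply R3.
  - intros a H. pose proof (dist_via X d Hd B C b0 c0 a _ Hb Hc Q1).
    pose proof (P1 a H). lra.
  - intros c H. pose proof (dist_via X d Hd B A b0 a0 c _ Hb Ha P2).
    pose proof (Q2 c H). lra.
Qed.

Lemma compact_bnd X d (Hd : is_metric X d) A : in_KX X d A -> exists a0, A a0 /\ bnd X d A.
Proof.
  intros [[a0 Ha0] HC]. exists a0. split; auto.
  destruct (HC nat (fun n y => d a0 y < INR n)) as [l Hl].
  - intros n y Hy. exists (INR n - d a0 y). split; [lra|].
    intros z Hz. destruct Hd as [_ _ T]. pose proof (T a0 y z). lra.
  - intros a _. destruct (archimed (d a0 a)) as [H1 _].
    destruct (up (d a0 a)) eqn:E.
    + exists 0%nat. simpl. pose proof (d_nonneg X d Hd a0 a). simpl in H1. lra.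
    + exists (Pos.to_nat p). rewrite INR_IPR. simpl in H1. auto.
    + exists 0%nat. simpl. pose proof (IZR_lt _ _ (Pos2Z.neg_is_neg p)). lra.
  - exists a0, (fold_right (fun n acc => INR n + acc) 0 l).
    intros a Ha. destruct (Hl a Ha) as [i [Hi Hu]].
    assert (forall l', In i l' -> INR i <= fold_right (fun n acc => INR n + acc) 0 l').
    { clear. intros l0. induction l0; simpl; intros H. contradiction.
      assert (0 <= fold_right (fun n acc => INR n + acc) 0 l0).
      { clear. induction l0 as [|z l0 IH]; simpl. lra. pose proof (pos_INR z). lra. }
      destruct H as [->|H]. lra. pose proof (IHl0 H). pose proof (pos_INR a). lra. }
    pose proof (H l Hi). lra.
Qed.

Definition Gc (D : R -> R -> R) (beta a b h : R) :=
  exists n (t : nat -> R), t O = a /\ t n = b /\ (forall i, (i < n)%nat -> t i < t (S i)) /\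
    h <= beta * psum (fun i => D (t i) (t (S i))) n.

Lemma psum_ext g g' n : (forall i, (i < n)%nat -> g i = g' i) -> psum g n = psum g' n.
Proof.
  induction n; simpl; intros H; auto.
  rewrite IHn by (intros; apply H; lia). rewrite H by lia. auto.
Qed.

Lemma Gc_mono D beta a b h h' : Gc D beta a b h -> h' <= h -> Gc D beta a b h'.
Proof. intros [n [t [H1 [H2 [H3 H4]]]]] Hh. exists n, t. repeat split; auto. lra. Qed.

Lemma Gc_refl D beta a : Gc D beta a a 0 -> True.
Proof. auto. Qed.

Lemma Gc_zero D beta a h : h <= 0 -> Gc D beta a a h.
Proof. intros Hh. exists O, (fun _ => a). repeat split; auto. intros; lia. simpl. lra. Qed.

Lemma Gc_ext D beta a c e h : Gc D beta a c h -> c < e ->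
  Gc D beta a e (h + beta * D c e).
Proof.
  intros [n [t [H1 [H2 [H3 H4]]]]] Hce.
  exists (S n), (fun i => if Nat.leb i n then t i else e).
  repeat split.
  - simpl. auto.
  - destruct (Nat.leb (S n) n) eqn:E; [apply Nat.leb_le in E; lia | auto].
  - intros i Hi. destruct (Nat.leb i n) eqn:E1.
    + apply Nat.leb_le in E1. destruct (Nat.leb (S i) n) eqn:E2.
      * apply H3. apply Nat.leb_le in E2. lia.
      * apply Nat.leb_gt in E2. assert (i = n) by lia. subst. lra.
    + apply Nat.leb_gt in E1. lia.
  - assert (E: Nat.leb (S n) n = false) by (apply Nat.leb_gt; lia).
    cbn [psum]. rewrite E, Nat.leb_refl.
    rewrite H2.
    rewrite (psum_ext _ (fun i => D (t i) (t (S i)))).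
    + lra.
    + intros i Hi. assert (E1: Nat.leb i n = true) by (apply Nat.leb_le; lia).
      assert (E2: Nat.leb (S i) n = true) by (apply Nat.leb_le; lia).
      cbv beta. rewrite E1, E2. auto.
Qed.

Lemma stepA (K D : R -> R -> R) beta (Hb : 0 <= beta)
  (HL : forall c, 0 <= c <= 1 -> exists eta, 0 < eta /\ forall s, 0 <= s <= 1 ->
          Rabs (s - c) < eta -> K c s <= beta * D c s)
  (Htri : forall s1 s2 s3, 0 <= s1 <= 1 -> 0 <= s2 <= 1 -> 0 <= s3 <= 1 ->
          K s1 s3 <= K s1 s2 + K s2 s3)
  (Hself : forall s, 0 <= s <= 1 -> K s s <= 0)
  (HKs : forall s1 s2, K s1 s2 = K s2 s1) (HDs : forall s1 s2, D s1 s2 = D s2 s1) :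
  forall a b h0, 0 <= a -> a <= b -> b <= 1 -> Gc D beta 0 a h0 -> Gc D beta 0 b (h0 + K a b).
Proof.
  intros a b h0 Ha Hab Hb1 G0.
  set (T := fun c => a <= c <= b /\ Gc D beta 0 c (h0 + K a c)).
  assert (Ta : T a).
  { split. lra. apply (Gc_mono _ _ _ _ h0); auto. pose proof (Hself a). lra. }
  destruct (completeness T) as [m [Hub Hlub]].
  { exists b. intros c [Hc _]. lra. }
  { exists a. auto. }
  assert (Ham : a <= m) by (apply Hub; auto).
  assert (Hmb : m <= b) by (apply Hlub; intros c [Hc _]; lra).
  destruct (HL m) as [eta [Heta Hloc]]; [lra|].
  assert (Hex : exists c, T c /\ m - eta < c).
  { apply NNPP. intros Hn.
    assert (m <= m - eta).
    { apply Hlub. intros c Tc. apply Rnot_lt_le. intros Hc. apply Hn. exists c. auto. }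
    lra. }
  destruct Hex as [c [Tc Hc]].
  assert (Hcm : c <= m) by (apply Hub; auto).
  assert (Tm : T m).
  { destruct (Rle_lt_or_eq_dec c m Hcm) as [Hlt|Heq]; [|subst; auto].
    destruct Tc as [Hc1 Gc1].
    split; [lra|].
    pose proof (Gc_ext _ _ _ _ _ _ Gc1 Hlt) as G2.
    apply (Gc_mono _ _ _ _ _ _ G2).
    assert (K m c <= beta * D m c) by (apply Hloc; [lra| rewrite Rabs_left1; lra]).
    rewrite HKs in H. rewrite HDs in H.
    pose proof (Htri a c m). lra. }
  destruct (Rle_lt_or_eq_dec m b Hmb) as [Hlt|Heq].
  - exfalso.
    set (m' := Rmin b (m + eta / 2)).
    assert (Hm'1 : m < m') by (unfold m'; apply Rmin_glb_lt; lra).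
    assert (Hm'2 : m' <= b) by apply Rmin_l.
    assert (Hm'3 : m' <= m + eta / 2) by apply Rmin_r.
    assert (T m').
    { destruct Tm as [_ Gm]. split; [lra|].
      pose proof (Gc_ext _ _ _ _ _ _ Gm Hm'1) as G2.
      apply (Gc_mono _ _ _ _ _ _ G2).
      assert (K m m' <= beta * D m m') by (apply Hloc; [lra| rewrite Rabs_right; lra]).
      pose proof (Htri a m m'). lra. }
    pose proof (Hub m' H). lra.
  - subst. destruct Tm; auto.
Qed.

Lemma part_bounds n t : is_partition n t -> forall k, (k <= n)%nat -> 0 <= t k <= 1.
Proof.
  intros [H0 [H1 H2]].
  assert (M : forall k j, (k + j <= n)%nat -> t k <= t (k + j)%nat).
  { intros k j. induction j; intros Hj. rewrite Nat.add_0_r. lra.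
    rewrite Nat.add_succ_r. pose proof (H2 (k + j)%nat ltac:(lia)). pose proof (IHj ltac:(lia)). lra. }
  intros k Hk. split.
  - pose proof (M 0%nat k ltac:(lia)). simpl in H. lra.
  - pose proof (M k (n - k)%nat ltac:(lia)). replace (k + (n - k))%nat with n in H by lia. lra.
Qed.

Lemma chainA (K D : R -> R -> R) beta (Hb : 0 <= beta)
  (HL : forall c, 0 <= c <= 1 -> exists eta, 0 < eta /\ forall s, 0 <= s <= 1 ->
          Rabs (s - c) < eta -> K c s <= beta * D c s)
  (Htri : forall s1 s2 s3, 0 <= s1 <= 1 -> 0 <= s2 <= 1 -> 0 <= s3 <= 1 ->
          K s1 s3 <= K s1 s2 + K s2 s3)
  (Hself : forall s, 0 <= s <= 1 -> K s s <= 0)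
  (HKs : forall s1 s2, K s1 s2 = K s2 s1) (HDs : forall s1 s2, D s1 s2 = D s2 s1) :
  forall n t, is_partition n t -> Gc D beta 0 1 (psum (fun i => K (t i) (t (S i))) n).
Proof.
  intros n t Hp.
  assert (forall k, (k <= n)%nat -> Gc D beta 0 (t k) (psum (fun i => K (t i) (t (S i))) k)).
  { induction k; intros Hk.
    - simpl. destruct Hp as [-> _]. apply Gc_zero. lra.
    - simpl. pose proof (part_bounds n t Hp k ltac:(lia)).
      pose proof (part_bounds n t Hp (S k) Hk).
      destruct Hp as [_ [_ H3]]. pose proof (H3 k ltac:(lia)).
      apply (stepA K D beta Hb HL Htri Hself HKs HDs); try lra. apply IHk. lia. }
  destruct Hp as [H0 [H1 H2]]. rewrite <- H1. apply H. lia.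
Qed.

Lemma local_pt X d (Hd : is_metric X d) (F : X -> X -> Prop) (HF : forall x, in_KX X d (F x))
  beta (Hb : 0 <= beta) (Y : X -> Prop) x (Hs : Rbar_lt (s_Y X d F Y x) (Finite beta)) :
  exists delta, 0 < delta /\ forall y, Y y -> d x y < delta ->
    hausdorff X d (F x) (F y) <= beta * d x y.
Proof.
  assert (Hself : hausdorff X d (F x) (F x) <= beta * d x x).
  { rewrite (d_refl X d Hd x). destruct (compact_bnd X d Hd (F x) (HF x)) as [a0 [Ha0 Ba]].
    pose proof (haus_self X d Hd (F x) a0 Ha0 Ba). lra. }
  unfold s_Y in Hs. destruct (excluded_middle_informative (is_limit_point X d Y x)) as [Hlim|Hn].
  - unfold local_lip in Hs.
    set (S := fun s => exists delta, 0 < delta /\ Rbar_le (local_sup X d F Y x delta) (Finite s)) in Hs.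
    assert (Hex : exists s, S s /\ s < beta).
    { apply NNPP; intro Hn. destruct (Glb_Rbar_correct S) as [_ Hl].
      assert (Rbar_le beta (Glb_Rbar S)).
      { apply Hl. intros s Hs'. simpl. apply Rnot_lt_le. intro. apply Hn. eauto. }
      exact (Rbar_lt_not_le _ _ Hs H). }
    destruct Hex as [s [[delta [Hdel Hle]] Hsb]].
    exists delta. split; auto. intros y Yy Hdy.
    destruct (classic (y = x)) as [->|Hne]; auto.
    unfold local_sup in Hle.
    destruct (Lub_Rbar_correct (fun r => exists y, Y y /\ y <> x /\ d x y < delta /\
                               r = hausdorff X d (F x) (F y) / d x y)) as [Hub _].
    assert (Hr : Rbar_le (hausdorff X d (F x) (F y) / d x y) s).
    { eapply Rbar_le_trans; [apply Hub|exact Hle]. exists y. repeat split; auto. }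
    simpl in Hr.
    assert (Hpos : 0 < d x y).
    { destruct (Rle_lt_or_eq_dec 0 (d x y) (d_nonneg X d Hd x y)) as [h|h]; auto.
      exfalso. apply Hne. symmetry. apply (metric_sep X d Hd). auto. }
    assert (hausdorff X d (F x) (F y) = (hausdorff X d (F x) (F y) / d x y) * d x y)
      by (field; lra).
    rewrite H. apply Rmult_le_compat_r; lra.
  - assert (exists delta, ~ (0 < delta -> exists y, Y y /\ y <> x /\ d x y < delta)) as [delta Hdl].
    { apply not_all_ex_not. exact Hn. }
    apply imply_to_and in Hdl. destruct Hdl as [Hdel Hno].
    exists delta. split; auto. intros y Yy Hdy.
    destruct (classic (y = x)) as [->|Hne]; auto.
    exfalso. apply Hno. exists y. auto.
Qed.

Theorem lemma16 (X : Type) (d : X -> X -> R) (Hd : is_metric X d)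
  (Hne : inhabited X) (p : R -> X) (Hp : rectifiable X d p)
  (F : X -> X -> Prop) (HF : forall x, in_KX X d (F x))
  (beta : R) (Hbeta : 0 <= beta <= 1) :
  let Y := fun y => exists t, 0 <= t <= 1 /\ p t = y in
  (forall x, Y x -> Rbar_lt (s_Y X d F Y x) (Finite beta)) ->
  Rbar_le (set_path_length X d F p) (Rbar_mult (Finite beta) (path_length X d p))
  /\ Rbar_lt (Rbar_mult (Finite beta) (path_length X d p)) p_infty.
Proof.
  intros Y HY.
  destruct Hp as [Hcont Hlen].
  assert (HL : exists L, path_length X d p = Finite L /\ forall n t, is_partition n t ->
             psum (fun i => d (p (t i)) (p (t (S i)))) n <= L).
  { unfold path_length, variation in *.
    destruct (Lub_Rbar_correct (fun s => exists (n : nat) (t : nat -> R), is_partition n t /\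
                       s = psum (fun i => d (p (t i)) (p (t (S i)))) n)) as [Hub _].
    assert (E1 : Rbar_le (psum (fun i => d (p (INR i)) (p (INR (S i)))) 1) (Lub_Rbar (fun s => exists (n : nat) (t : nat -> R), is_partition n t /\
                       s = psum (fun i => d (p (t i)) (p (t (S i)))) n))).
    { apply Hub. exists 1%nat, INR. split; auto. split; [simpl; auto|split; [simpl; auto|]].
      intros i Hi. apply lt_INR. lia. }
    destruct (Lub_Rbar _) as [L| |]; simpl in Hlen, E1; try contradiction.
    exists L. split; auto. intros n t Hpt. exact (Hub _ (ex_intro _ n (ex_intro _ t (conj Hpt eq_refl)))). }
  destruct HL as [L [HLe HLb]].
  rewrite HLe. split; [|simpl; auto].
  unfold set_path_length, variation.
  destruct (Lub_Rbar_correct (fun s => exists (n : nat) (t : nat -> R), is_partition n t /\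
     s = psum (fun i => hausdorff X d (F (p (t i))) (F (p (t (S i))))) n)) as [_ Hl].
  apply Hl. intros s [n [t [Hpt ->]]]. simpl.
  assert (Hbnd : forall s, exists a0, F (p s) a0 /\ bnd X d (F (p s))).
  { intros s0. apply compact_bnd; auto. }
  destruct (chainA (fun s1 s2 => hausdorff X d (F (p s1)) (F (p s2)))
                   (fun s1 s2 => d (p s1) (p s2)) beta (proj1 Hbeta)) with (n := n) (t := t)
    as [n' [t' [T0 [T1 [T2 T3]]]]]; auto.
  - intros c Hc. destruct (local_pt X d Hd F HF beta (proj1 Hbeta) Y (p c) (HY (p c) (ex_intro _ c (conj Hc eq_refl))))
      as [delta [Hdel Hloc]].
    destruct (Hcont c Hc delta Hdel) as [eta [Heta Hc2]].
    exists eta. split; auto. intros s Hs Habs. apply Hloc.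
    + exists s. auto.
    + apply Hc2; auto.
  - intros s1 s2 s3 _ _ _.
    destruct (Hbnd s1) as [a1 [A1 B1]]. destruct (Hbnd s2) as [a2 [A2 B2]].
    destruct (Hbnd s3) as [a3 [A3 B3]].
    exact (haus_tri X d Hd _ _ _ a1 a2 a3 A1 A2 A3 B1 B2 B3).
  - intros s0 _. destruct (Hbnd s0) as [a1 [A1 B1]]. exact (haus_self X d Hd _ a1 A1 B1).
  - intros. apply haus_sym.
  - intros. apply (metric_sym X d Hd).
  - pose proof (HLb n' t' (conj T0 (conj T1 T2))).
    eapply Rle_trans; [exact T3|]. apply Rmult_le_compat_l; [lra|]. exact H.
Qed.
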